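(* Let $H$ be a fixed infinite-dimensional separable Hilbert space and let $J$ be a homogeneous two-sided ideal in $\mathbb{C}\langle x_1,\dots,x_d\rangle$, $d<\infty$. Then $I(Z(J))=J$. In particular $Z(J)=\{(0,\dots,0)\}$ if and only if $J$ is the ideal generated by $x_1,\dots,x_d$.
   Context: $\mathbb{C}\langle x_1,\dots,x_d\rangle$ is the algebra of polynomials in noncommuting variables; a homogeneous ideal is a two-sided ideal generated by homogeneous polynomials. For $p=\sum_\alpha c_\alpha x^\alpha$ and $\underline T=(T_1,\dots,T_d)\in B(H)^d$, $p(\underline T)=\sum_\alpha c_\alpha T^\alpha$ with $T^{\alpha_1\cdots\alpha_k}=T_{\alpha_1}\cdots T_{\alpha_k}$ and $T^{\emptyset}=I_H$. $Z(J)=\{\underline T\in B(H)^d: p(\underline T)=0\ \forall p\in J\}$ and, for $Z\subseteq B(H)^d$, $I(Z)=\{p: p(\underline T)=0\ \forall\underline T\in Z\}$. *)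

(* Defs.v *)
From Stdlib Require Import Reals List Lra.
Import ListNotations.
Open Scope R_scope.

Record C := mkC { Re : R; Im : R }.
Definition C0 : C := mkC 0 0.
Definition C1 : C := mkC 1 0.
Definition Cadd (z w : C) : C := mkC (Re z + Re w) (Im z + Im w).
Definition Cmul (z w : C) : C :=
  mkC (Re z * Re w - Im z * Im w) (Re z * Im w + Im z * Re w).
Definition Cnorm2 (z : C) : R := Re z * Re z + Im z * Im z.

(** The Hilbert space H = l^2(N; C) (the infinite-dimensional separable one). *)
Definition vec := nat -> C.
Definition vadd (f g : vec) : vec := fun n => Cadd (f n) (g n).
Definition vscal (c : C) (f : vec) : vec := fun n => Cmul c (f n).
Definition vzero : vec := fun _ => C0.
Definition sqsum (f : vec) (l : R) : Prop := infinite_sum (fun n => Cnorm2 (f n)) l.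
Definition in_l2 (f : vec) : Prop := exists l, sqsum f l.

(** Operators; only their action on H matters. *)
Definition op := vec -> vec.
(* T is (the restriction to H of) an element of B(H): linear on H, maps H
   into H, and ||T f||^2 <= M ||f||^2. *)
Definition bounded_op (T : op) : Prop :=
  (forall f g, in_l2 f -> in_l2 g -> forall n, T (vadd f g) n = vadd (T f) (T g) n) /\
  (forall c f, in_l2 f -> forall n, T (vscal c f) n = vscal c (T f) n) /\
  (exists M, forall f l, sqsum f l -> exists l', sqsum (T f) l' /\ l' <= M * l).

(** Noncommutative polynomials, given as finite lists of terms c * x^w,
    with word w = [i1; ...; ik] standing for x_{i1} ... x_{ik}
    (variables indexed from 0, i.e. x_1..x_d of the paper are 0..d-1). *)
Definition word := list nat.
Definition term := (word * C)%type.
Definition ncpoly := list term.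

Definition is_poly (d : nat) (p : ncpoly) : Prop :=
  Forall (fun t => Forall (fun i => (i < d)%nat) (fst t)) p.

Definition coef (p : ncpoly) (w : word) : C :=
  fold_right (fun t acc => Cadd (if list_eq_dec Nat.eq_dec (fst t) w then snd t else C0) acc)
             C0 p.

Definition is_homog (p : ncpoly) : Prop :=
  exists k, forall w, coef p w <> C0 -> length w = k.

Fixpoint word_act (T : nat -> op) (w : word) (f : vec) : vec :=
  match w with
  | nil => f
  | i :: w' => T i (word_act T w' f)
  end.

Definition peval (T : nat -> op) (p : ncpoly) (f : vec) : vec :=
  fold_right (fun t acc => vadd (vscal (snd t) (word_act T (fst t) f)) acc) vzero p.

Definition pvanish (T : nat -> op) (p : ncpoly) : Prop :=
  forall f, in_l2 f -> forall n, peval T p f n = C0.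

(** Two-sided ideal generated by a set G of polynomials (as a set of
    polynomials, closed under equality of coefficients). *)
Definition mono_mul (a : word) (p : ncpoly) (b : word) : ncpoly :=
  map (fun t => (a ++ fst t ++ b, snd t)) p.
Definition scal_poly (c : C) (p : ncpoly) : ncpoly :=
  map (fun t => (fst t, Cmul c (snd t))) p.

Definition in_ideal (d : nat) (G : ncpoly -> Prop) (p : ncpoly) : Prop :=
  is_poly d p /\
  exists L : list (word * C * ncpoly * word),
    Forall (fun x => match x with (a, c, g, b) =>
               G g /\ Forall (fun i => (i < d)%nat) a /\ Forall (fun i => (i < d)%nat) b end) L /\
    forall w, coef p w =
      coef (flat_map (fun x => match x with (a, c, g, b) => scal_poly c (mono_mul a g b) end) L) w.

(** Zero set and vanishing ideal.  A d-tuple in B(H)^d is represented by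
    T : nat -> op, of which only T 0, ..., T (d-1) are relevant. *)
Definition inZ (d : nat) (J : ncpoly -> Prop) (T : nat -> op) : Prop :=
  (forall i, (i < d)%nat -> bounded_op (T i)) /\ (forall p, J p -> pvanish T p).

Definition inI (d : nat) (Z : (nat -> op) -> Prop) (p : ncpoly) : Prop :=
  is_poly d p /\ forall T, Z T -> pvanish T p.

Definition variables (d : nat) (g : ncpoly) : Prop :=
  exists i, (i < d)%nat /\ g = [([i], C1)].

(* Main.v *)
From Stdlib Require Import Reals List Lra Lia Psatz Ring Field.
From Stdlib Require Import Classical ClassicalEpsilon FunctionalExtensionality.
Require Import Defs.
Import ListNotations.

Lemma C_ext (z w : C) : Re z = Re w -> Im z = Im w -> z = w.
Proof. destruct z, w; simpl; intros; subst; reflexivity. Qed.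

Definition Copp (z : C) : C := mkC (- Re z) (- Im z).
Definition Csub (z w : C) : C := Cadd z (Copp w).

Ltac Cdes := repeat match goal with z : C |- _ => destruct z end.
Ltac Csolve := Cdes; apply C_ext; unfold Cadd, Cmul, Copp, Csub, C0, C1; simpl; ring.

Lemma Cring_th : ring_theory C0 C1 Cadd Cmul Csub Copp (@eq C).
Proof. constructor; intros; Csolve. Qed.
Add Ring Cring : Cring_th.

Definition Cinv (z : C) : C := mkC (Re z / Cnorm2 z) (- Im z / Cnorm2 z).
Definition Cdiv (z w : C) : C := Cmul z (Cinv w).

Lemma Cnorm2_nz z : z <> C0 -> Cnorm2 z <> 0%R.
Proof. intros H E. apply H. destruct z as [a b]. unfold Cnorm2 in E; simpl in E.
  assert (a = 0%R) by nra. assert (b = 0%R) by nra. subst. reflexivity. Qed.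

Lemma C1_neq_C0 : C1 <> C0.
Proof. intro H. injection H. lra. Qed.

Lemma Cfield_th : field_theory C0 C1 Cadd Cmul Csub Copp Cdiv Cinv (@eq C).
Proof. constructor.
- exact Cring_th.
- exact C1_neq_C0.
- reflexivity.
- intros z Hz. pose proof (Cnorm2_nz z Hz). destruct z as [a b].
  unfold Cnorm2 in *; simpl in *. apply C_ext; unfold Cmul, Cinv, Cnorm2, C1; simpl; field; auto.
Qed.
Add Field Cfield : Cfield_th.


Definition ev (X : word -> C) (p : ncpoly) : C :=
  fold_right (fun t acc => Cadd (Cmul (snd t) (X (fst t))) acc) C0 p.
Definition ind (w : word) : word -> C :=
  fun u => if list_eq_dec Nat.eq_dec u w then C1 else C0.

Lemma coef_ev p w : coef p w = ev (ind w) p.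
Proof. induction p as [|[u c] p IH]; simpl; [reflexivity|]. rewrite IH. unfold ind.
  destruct (list_eq_dec Nat.eq_dec u w); simpl; ring. Qed.

Lemma peval_ev T p f n : peval T p f n = ev (fun w => word_act T w f n) p.
Proof. induction p as [|[u c] p IH]; simpl; [reflexivity|]. unfold vadd, vscal. rewrite IH. reflexivity. Qed.

Lemma ev_nil X : ev X [] = C0. Proof. reflexivity. Qed.
Lemma ev_cons X t p : ev X (t :: p) = Cadd (Cmul (snd t) (X (fst t))) (ev X p).
Proof. reflexivity. Qed.
Lemma ev_app X p q : ev X (p ++ q) = Cadd (ev X p) (ev X q).
Proof. induction p; simpl; [ring|]. rewrite IHp. ring. Qed.
Lemma ev_scal X c p : ev X (scal_poly c p) = Cmul c (ev X p).
Proof. induction p; simpl; [ring|]. rewrite IHp. ring. Qed.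
Lemma ev_mono X a p b : ev X (mono_mul a p b) = ev (fun u => X (a ++ u ++ b)) p.
Proof. induction p; simpl; [ring|]. rewrite IHp. reflexivity. Qed.
Lemma ev_Xadd X Y p : ev (fun w => Cadd (X w) (Y w)) p = Cadd (ev X p) (ev Y p).
Proof. induction p; simpl; [ring|]. rewrite IHp. ring. Qed.
Lemma ev_Xscal X c p : ev (fun w => Cmul c (X w)) p = Cmul c (ev X p).
Proof. induction p; simpl; [ring|]. rewrite IHp. ring. Qed.
Lemma ev_X0 p : ev (fun _ => C0) p = C0.
Proof. induction p; simpl; [ring|]. rewrite IHp. ring. Qed.
Lemma ev_ext X Y p : (forall w, X w = Y w) -> ev X p = ev Y p.
Proof. intro H. induction p; simpl; [ring|]. rewrite IHp, H. ring. Qed.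
Lemma ev_ext_Forall X Y p : Forall (fun t => X (fst t) = Y (fst t)) p -> ev X p = ev Y p.
Proof. intro H. induction H; simpl; [ring|]. rewrite IHForall, H. ring. Qed.

Lemma ev_swap (Y : word -> word -> C) g h :
  ev (fun w => ev (fun v => Y w v) h) g = ev (fun v => ev (fun w => Y w v) g) h.
Proof. induction g as [|[u c] g IH]; simpl.
- symmetry. apply ev_X0.
- rewrite IH. rewrite <- ev_Xscal, <- ev_Xadd. reflexivity. Qed.

Definition wneq (u : word) (t : term) : bool :=
  if list_eq_dec Nat.eq_dec (fst t) u then false else true.

Lemma wneq_same u c : wneq u (u, c) = false.
Proof. unfold wneq; simpl. destruct (list_eq_dec Nat.eq_dec u u); congruence. Qed.
Lemma wneq_diff u v c : v <> u -> wneq u (v, c) = true.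
Proof. unfold wneq; simpl. destruct (list_eq_dec Nat.eq_dec v u); congruence. Qed.

Lemma ev_filter_out X p u : ev X p = Cadd (Cmul (coef p u) (X u)) (ev X (filter (wneq u) p)).
Proof. induction p as [|[v c] p IH]; simpl; [ring|].
  destruct (list_eq_dec Nat.eq_dec v u).
  - subst. rewrite wneq_same. rewrite IH. ring.
  - rewrite wneq_diff by auto. simpl. rewrite IH. ring. Qed.

Lemma coef_filter_out p u w : coef (filter (wneq u) p) w =
  if list_eq_dec Nat.eq_dec w u then C0 else coef p w.
Proof. induction p as [|[v c] p IH]; simpl.
- destruct (list_eq_dec Nat.eq_dec w u); reflexivity.
- destruct (list_eq_dec Nat.eq_dec v u).
  + subst. rewrite wneq_same. rewrite IH. subst. destruct (list_eq_dec Nat.eq_dec w u); destruct (list_eq_dec Nat.eq_dec u w); subst; try congruence; ring.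
  + rewrite wneq_diff by auto. simpl. rewrite IH. destruct (list_eq_dec Nat.eq_dec w u); destruct (list_eq_dec Nat.eq_dec v w); subst; try congruence; ring.
Qed.

Lemma ev_coef_zero X p : (forall w, coef p w = C0) -> ev X p = C0.
Proof.
  remember (length p) as k. assert (Hk : (length p <= k)%nat) by lia. clear Heqk.
  revert p Hk. induction k; intros p Hk H.
  - destruct p; simpl in *; [reflexivity| lia].
  - rewrite (ev_filter_out X p (match p with [] => [] | t :: _ => fst t end)).
    rewrite H. destruct p as [|[u c] p]; [simpl; ring|]. simpl in *.
    rewrite wneq_same.
    rewrite IHk.
    + ring.
    + pose proof (filter_length_le (wneq u) p). lia.
    + intro w. pose proof (coef_filter_out p u w) as E.
      assert (Hw: coef ((u,c)::p) w = C0) by apply H. simpl in Hw.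
      destruct (list_eq_dec Nat.eq_dec u w).
      * subst. rewrite E. destruct (list_eq_dec Nat.eq_dec w w); congruence.
      * rewrite E. destruct (list_eq_dec Nat.eq_dec w u); [reflexivity|].
        rewrite <- Hw. ring.
Qed.

Definition psub (p q : ncpoly) : ncpoly := p ++ scal_poly (Copp C1) q.

Lemma coef_app p q w : coef (p ++ q) w = Cadd (coef p w) (coef q w).
Proof. rewrite !coef_ev. apply ev_app. Qed.
Lemma coef_scal c p w : coef (scal_poly c p) w = Cmul c (coef p w).
Proof. rewrite !coef_ev. apply ev_scal. Qed.
Lemma coef_psub p q w : coef (psub p q) w = Csub (coef p w) (coef q w).
Proof. unfold psub. rewrite coef_app, coef_scal. ring. Qed.

Lemma ev_resp X p q : (forall w, coef p w = coef q w) -> ev X p = ev X q.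
Proof. intro H. assert (E : ev X (psub p q) = C0).
  { apply ev_coef_zero. intro w. rewrite coef_psub, H. ring. }
  unfold psub in E. rewrite ev_app, ev_scal in E.
  assert (E2: ev X p = Cadd (Cadd (ev X p) (Cmul (Copp C1) (ev X q))) (ev X q)) by ring.
  rewrite E2, E. ring. Qed.

Lemma ev_point X X' g u :
  Forall (fun t => fst t <> u -> X (fst t) = X' (fst t)) g ->
  ev X g = Cadd (ev X' g) (Cmul (coef g u) (Csub (X u) (X' u))).
Proof. intro H. induction H as [|[v c] g Hv H IH]; simpl; [ring|]. simpl in Hv. rewrite IH.
  destruct (list_eq_dec Nat.eq_dec v u).
  - subst. ring.
  - rewrite Hv by auto. ring. Qed.

Lemma coef_mono_in a g b u : coef (mono_mul a g b) (a ++ u ++ b) = coef g u.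
Proof. rewrite !coef_ev, ev_mono. apply ev_ext. intro w. unfold ind.
  destruct (list_eq_dec Nat.eq_dec (a ++ w ++ b) (a ++ u ++ b)) as [E|E];
  destruct (list_eq_dec Nat.eq_dec w u); subst; try reflexivity.
  - apply app_inv_head in E. apply app_inv_tail in E. congruence.
  - congruence. Qed.

Lemma coef_mono_out a g b w : (forall u, w <> a ++ u ++ b) -> coef (mono_mul a g b) w = C0.
Proof. intro H. rewrite !coef_ev, ev_mono. rewrite <- (ev_X0 g). apply ev_ext. intro u. unfold ind.
  destruct (list_eq_dec Nat.eq_dec (a ++ u ++ b) w); [|reflexivity]. exfalso; eapply H; eauto. Qed.

Lemma coef_Forall_out (P : word -> Prop) p w :
  Forall (fun t => P (fst t)) p -> ~ P w -> coef p w = C0.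
Proof. intros H Hw. induction H as [|[v c] p Hv H IH]; simpl; [reflexivity|]. rewrite IH.
  destruct (list_eq_dec Nat.eq_dec v w); [subst; contradiction|ring]. Qed.

Definition tmf (x : word * C * ncpoly * word) : ncpoly :=
  match x with (a, c, g, b) => scal_poly c (mono_mul a g b) end.
Definition goodL (d : nat) (G : ncpoly -> Prop) (x : word * C * ncpoly * word) : Prop :=
  match x with (a, c, g, b) =>
     G g /\ Forall (fun i => (i < d)%nat) a /\ Forall (fun i => (i < d)%nat) b end.

Lemma in_ideal_iff d G p : in_ideal d G p <->
  is_poly d p /\ exists L, Forall (goodL d G) L /\ forall w, coef p w = coef (flat_map tmf L) w.
Proof. reflexivity. Qed.

Lemma ev_flat {A} X (F : A -> ncpoly) L :
  ev X (flat_map F L) = fold_right (fun x acc => Cadd (ev X (F x)) acc) C0 L.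
Proof. induction L; simpl; [reflexivity|]. rewrite ev_app, IHL. reflexivity. Qed.

Lemma is_poly_nil d : is_poly d []. Proof. constructor. Qed.
Lemma is_poly_app d p q : is_poly d p -> is_poly d q -> is_poly d (p ++ q).
Proof. unfold is_poly. intros; apply Forall_app; auto. Qed.
Lemma is_poly_scal d c p : is_poly d p -> is_poly d (scal_poly c p).
Proof. unfold is_poly, scal_poly. intro H. apply Forall_map. eapply Forall_impl; [|exact H]. simpl; auto. Qed.
Lemma is_poly_mono d a p b : Forall (fun i => (i < d)%nat) a -> Forall (fun i => (i < d)%nat) b ->
  is_poly d p -> is_poly d (mono_mul a p b).
Proof. unfold is_poly, mono_mul. intros Ha Hb H. apply Forall_map. eapply Forall_impl; [|exact H].
  simpl; intros. rewrite !Forall_app; auto. Qed.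
Lemma is_poly_filter d f p : is_poly d p -> is_poly d (filter f p).
Proof. unfold is_poly. intro H. apply Forall_forall. intros x Hx. apply filter_In in Hx.
  eapply Forall_forall in H; [exact H| tauto]. Qed.
Lemma is_poly_flat {A} d (F : A -> ncpoly) L : Forall (fun x => is_poly d (F x)) L -> is_poly d (flat_map F L).
Proof. induction 1; simpl; [constructor|]. apply is_poly_app; auto. Qed.
Lemma is_poly_psub d p q : is_poly d p -> is_poly d q -> is_poly d (psub p q).
Proof. intros; unfold psub; apply is_poly_app; auto; apply is_poly_scal; auto. Qed.

Lemma J_resp d G p q : in_ideal d G p -> is_poly d q -> (forall w, coef q w = coef p w) -> in_ideal d G q.
Proof. intros [Hp [L [HL HE]]] Hq Hw. split; auto. exists L. split; auto. intro w. rewrite Hw. auto. Qed.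

Lemma J_nil d G : in_ideal d G [].
Proof. split; [constructor|]. exists []. split; [constructor|]. reflexivity. Qed.

Lemma J_app d G p q : in_ideal d G p -> in_ideal d G q -> in_ideal d G (p ++ q).
Proof. intros [Hp [L1 [H1 E1]]] [Hq [L2 [H2 E2]]]. split; [apply is_poly_app; auto|].
  exists (L1 ++ L2). split; [apply Forall_app; auto|]. intro w.
  change (@flat_map (word * C * ncpoly * word) term tmf (L1 ++ L2)) with (flat_map tmf (L1 ++ L2)).
  rewrite flat_map_app, !coef_app, E1, E2. reflexivity. Qed.

Lemma J_scal d G c p : in_ideal d G p -> in_ideal d G (scal_poly c p).
Proof. intros [Hp [L [HL E]]]. split; [apply is_poly_scal; auto|].
  exists (map (fun x => match x with (a, c', g, b) => (a, Cmul c c', g, b) end) L).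
  split.
  - apply Forall_map. eapply Forall_impl; [|exact HL]. intros [[[a c'] g] b]; simpl; auto.
  - intro w. rewrite coef_scal, E. rewrite !coef_ev. change (flat_map _ ?L) with (flat_map tmf L).
    rewrite !ev_flat. clear HL E. induction L as [|[[[a c'] g] b] L IH]; simpl; [ring|].
    rewrite <- IH. rewrite !ev_scal. ring.
Qed.

Lemma J_mono d G a p b : Forall (fun i => (i < d)%nat) a -> Forall (fun i => (i < d)%nat) b ->
  in_ideal d G p -> in_ideal d G (mono_mul a p b).
Proof. intros Ha Hb [Hp [L [HL E]]]. split; [apply is_poly_mono; auto|].
  exists (map (fun x => match x with (a', c, g, b') => (a ++ a', c, g, b' ++ b) end) L).
  split.
  - apply Forall_map. eapply Forall_impl; [|exact HL]. intros [[[a' c'] g] b']; simpl.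
    intros [? [? ?]]; repeat split; auto; apply Forall_app; auto.
  - intro w. rewrite !coef_ev, ev_mono. rewrite (ev_resp _ p (flat_map tmf L)) by exact E.
    change (flat_map _ (map _ L)) with (flat_map tmf
       (map (fun x => match x with (a', c, g, b') => (a ++ a', c, g, b' ++ b) end) L)).
    rewrite !ev_flat. clear HL E. induction L as [|[[[a' c'] g] b'] L IH]; simpl; [ring|].
    rewrite IH, !ev_scal, !ev_mono. f_equal. f_equal. apply ev_ext. intro u.
    rewrite <- !app_assoc. reflexivity.
Qed.

Lemma J_flat {A} d G (F : A -> ncpoly) L : Forall (fun x => in_ideal d G (F x)) L -> in_ideal d G (flat_map F L).
Proof. induction 1; simpl; [apply J_nil|]. apply J_app; auto. Qed.

Lemma J_psub d G p q : in_ideal d G p -> in_ideal d G q -> in_ideal d G (psub p q).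
Proof. intros. unfold psub. apply J_app; auto. apply J_scal; auto. Qed.

Definition lenb (m : nat) (t : term) : bool := Nat.leb (length (fst t)) m.

Lemma coef_filter_len m p w : coef (filter (lenb m) p) w = if Nat.leb (length w) m then coef p w else C0.
Proof. induction p as [|[v c] p IH]; simpl.
- destruct (Nat.leb (length w) m); reflexivity.
- unfold lenb at 1; simpl. destruct (Nat.leb (length v) m) eqn:Ev; simpl; rewrite IH;
  destruct (list_eq_dec Nat.eq_dec v w); subst; try rewrite Ev; destruct (Nat.leb (length w) m) eqn:Ew; try ring; congruence.
Qed.

Lemma coef_tm_zero a c g b w : (forall u, w = a ++ u ++ b -> coef g u = C0) -> coef (tmf (a, c, g, b)) w = C0.
Proof. intro H. simpl. rewrite coef_scal.
  destruct (classic (exists u, w = a ++ u ++ b)) as [[u Hu]|Hn].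
  - subst. rewrite coef_mono_in, H by reflexivity. ring.
  - rewrite coef_mono_out; [ring|]. intros u Hu. apply Hn; eauto. Qed.

Definition keep (m : nat) (x : word * C * ncpoly * word) : Prop :=
  match x with (a, c, g, b) => forall k, (forall w, coef g w <> C0 -> length w = k) ->
     (length a + k + length b <= m)%nat end.
Definition keepb m x : bool := if excluded_middle_informative (keep m x) then true else false.

Lemma J_trunc d G (hG : forall g, G g -> is_poly d g /\ is_homog g) j m :
  in_ideal d G j -> in_ideal d G (filter (lenb m) j).
Proof. intros [Hj [L [HL E]]]. split; [apply is_poly_filter; auto|].
  exists (filter (keepb m) L). split.
  - apply Forall_forall. intros x Hx. apply filter_In in Hx. eapply Forall_forall in HL; [exact HL|tauto].
  - intro w. rewrite coef_filter_len, E. clear E Hj. symmetry. induction HL as [|[[[a c] g] b] L Hx HL IH]; simpl.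
    + destruct (Nat.leb (length w) m); reflexivity.
    + destruct Hx as [Gg _]. destruct (hG g Gg) as [_ [k0 Hk0]].
      unfold keepb at 1. destruct (excluded_middle_informative (keep m (a, c, g, b))) as [Kp|Kn]; simpl.
      * rewrite !coef_app, IH. destruct (Nat.leb (length w) m) eqn:Ew; [reflexivity|].
        change (scal_poly c (mono_mul a g b)) with (tmf (a, c, g, b)). rewrite coef_tm_zero; [ring|].
        intros u Hu. destruct (classic (coef g u = C0)) as [|Hn]; auto. exfalso.
        apply Hk0 in Hn. specialize (Kp k0 Hk0). apply Nat.leb_gt in Ew. subst w.
        rewrite !length_app in Ew. lia.
      * rewrite IH. destruct (Nat.leb (length w) m) eqn:Ew; [|reflexivity].
        rewrite coef_app. change (scal_poly c (mono_mul a g b)) with (tmf (a, c, g, b)).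
        rewrite coef_tm_zero; [ring|].
        intros u Hu. destruct (classic (coef g u = C0)) as [|Hn]; auto. exfalso.
        apply Kn. intros k Hk. apply Hk in Hn.
        apply Nat.leb_le in Ew. subst w. rewrite !length_app in Ew. lia.
Qed.

Definition good (d n : nat) (w : word) : Prop :=
  (length w <= n)%nat /\ Forall (fun i => (i < d)%nat) w.
Definition Kset d G n (q : ncpoly) : Prop :=
  exists j, in_ideal d G j /\ forall w, good d n w -> coef q w = coef j w.

Lemma Kev d G n p q : Kset d G n q -> (forall X, ev X p = ev X q) -> Kset d G n p.
Proof. intros [j [Hj E]] H. exists j. split; auto. intros w Hw. rewrite coef_ev, H, <- coef_ev. auto. Qed.
Lemma Knil d G n : Kset d G n [].
Proof. exists []. split; [apply J_nil|]. reflexivity. Qed.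
Lemma Kapp d G n p q : Kset d G n p -> Kset d G n q -> Kset d G n (p ++ q).
Proof. intros [j1 [H1 E1]] [j2 [H2 E2]]. exists (j1 ++ j2). split; [apply J_app; auto|].
  intros w Hw. rewrite !coef_app, E1, E2; auto. Qed.
Lemma Kscal d G n c p : Kset d G n p -> Kset d G n (scal_poly c p).
Proof. intros [j [H E]]. exists (scal_poly c j). split; [apply J_scal; auto|].
  intros w Hw. rewrite !coef_scal, E; auto. Qed.
Lemma KJ d G n j : in_ideal d G j -> Kset d G n j.
Proof. intro H. exists j. split; auto. Qed.
Lemma Kpsub d G n p q : Kset d G n p -> Kset d G n q -> Kset d G n (psub p q).
Proof. intros. apply Kapp; auto. apply Kscal; auto. Qed.
Lemma ev_psub X p q : ev X (psub p q) = Csub (ev X p) (ev X q).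
Proof. unfold psub. rewrite ev_app, ev_scal. ring. Qed.
Lemma Ksym d G n p q : Kset d G n (psub p q) -> Kset d G n (psub q p).
Proof. intro H. apply (Kev _ _ _ _ (scal_poly (Copp C1) (psub p q))); [apply Kscal; auto|].
  intro X. rewrite ev_scal, !ev_psub. ring. Qed.
Lemma Ktrans d G n p q r : Kset d G n (psub p q) -> Kset d G n (psub q r) -> Kset d G n (psub p r).
Proof. intros H1 H2. apply (Kev _ _ _ _ (psub p q ++ psub q r)); [apply Kapp; auto|].
  intro X. rewrite ev_app, !ev_psub. ring. Qed.
Lemma Kbad d G n w a : ~ good d n w -> Kset d G n [(w, a)].
Proof. intro H. exists []. split; [apply J_nil|]. intros v Hv. simpl.
  destruct (list_eq_dec Nat.eq_dec w v); [subst; contradiction|]. ring. Qed.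

Lemma Kleft d G n i q : (i < d)%nat -> Kset d G n q -> Kset d G n (mono_mul [i] q []).
Proof. intros Hi [j [Hj E]]. exists (mono_mul [i] j []). split.
  - apply J_mono; auto.
  - intros w Hw. destruct (classic (exists u, w = [i] ++ u ++ [])) as [[u Hu]|Hn].
    + subst. rewrite !coef_mono_in. apply E. destruct Hw as [Hl Hf].
      simpl in Hl, Hf. rewrite app_nil_r in *. inversion Hf; subst. split; auto; lia.
    + rewrite !coef_mono_out; auto; intros u Hu; apply Hn; eauto.
Qed.

Lemma Kwords d G n a q : Forall (fun i => (i < d)%nat) a -> Kset d G n q -> Kset d G n (mono_mul a q []).
Proof. intros Ha Hq. induction Ha as [|i a Hi Ha IH].
  - apply (Kev _ _ _ _ q); auto. intro X. rewrite ev_mono. apply ev_ext. intro w. simpl. rewrite app_nil_r. reflexivity.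
  - apply (Kev _ _ _ _ (mono_mul [i] (mono_mul a q []) [])); [apply Kleft; auto|].
    intro X. rewrite !ev_mono. apply ev_ext. intro w. simpl. rewrite !app_nil_r. reflexivity.
Qed.

Lemma Kflat {A} d G n (F : A -> ncpoly) L : Forall (fun x => Kset d G n (F x)) L -> Kset d G n (flat_map F L).
Proof. induction 1; simpl; [apply Knil|]. apply Kapp; auto. Qed.

Fixpoint words (d k : nat) : list word :=
  match k with 0 => [[]] | S k => flat_map (fun i => map (cons i) (words d k)) (seq 0 d) end.
Lemma words_spec d k w : In w (words d k) <-> length w = k /\ Forall (fun i => (i < d)%nat) w.
Proof. revert w. induction k; intro w; simpl.
- split.
  + intros [<-|[]]. split; auto.
  + intros [H _]. destruct w; [auto|discriminate].
- rewrite in_flat_map. split.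
  + intros [i [Hi Hw]]. apply in_seq in Hi. apply in_map_iff in Hw. destruct Hw as [u [<- Hu]].
    apply IHk in Hu. destruct Hu. simpl. split; [lia|]. constructor; auto; lia.
  + intros [Hl Hf]. destruct w as [|i u]; [discriminate|]. inversion Hf; subst. exists i. split.
    * apply in_seq. lia.
    * apply in_map. apply IHk. simpl in Hl. split; auto.
Qed.
Definition wordsUp d n : list word := flat_map (words d) (seq 0 (S n)).
Lemma wordsUp_spec d n w : In w (wordsUp d n) <-> good d n w.
Proof. unfold wordsUp, good. rewrite in_flat_map. split.
- intros [k [Hk Hw]]. apply in_seq in Hk. apply words_spec in Hw. destruct Hw. split; auto; lia.
- intros [Hl Hf]. exists (length w). split; [apply in_seq; lia|]. apply words_spec; auto.
Qed.

Fixpoint lc (B : list word) (c : nat -> C) : ncpoly :=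
  match B with [] => [] | w :: B' => (w, c 0%nat) :: lc B' (fun k => c (S k)) end.

Lemma ev_lc_add X B c1 c2 : ev X (lc B (fun k => Cadd (c1 k) (c2 k))) = Cadd (ev X (lc B c1)) (ev X (lc B c2)).
Proof. revert c1 c2. induction B; intros; simpl; [ring|]. rewrite (IHB (fun k => c1 (S k)) (fun k => c2 (S k))). ring. Qed.
Lemma ev_lc_scal X B a c : ev X (lc B (fun k => Cmul a (c k))) = Cmul a (ev X (lc B c)).
Proof. revert c. induction B; intros; simpl; [ring|]. rewrite (IHB (fun k => c (S k))). ring. Qed.
Lemma ev_lc_zero X B : ev X (lc B (fun _ => C0)) = C0.
Proof. induction B; simpl; [reflexivity|]. rewrite IHB. ring. Qed.
Lemma lc_ext B c c' : (forall k, (k < length B)%nat -> c k = c' k) -> lc B c = lc B c'.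
Proof. revert c c'. induction B; intros c c' H; simpl; [reflexivity|].
  rewrite H by (simpl; lia). f_equal. apply IHB. intros k Hk. apply H. simpl; lia. Qed.
Lemma lc_words B c : Forall (fun t => In (fst t) B) (lc B c).
Proof. revert c. induction B; intro c; simpl; constructor; simpl; auto.
  eapply Forall_impl; [|apply IHB]. simpl; auto. Qed.

Definition Ind d G n B : Prop :=
  forall c, Kset d G n (lc B c) -> forall k, (k < length B)%nat -> c k = C0.
Definition inspan d G n B q : Prop := exists c, Kset d G n (psub q (lc B c)).

Lemma greedy d G n W : exists B, Ind d G n B /\ (forall w, In w W -> inspan d G n B [(w, C1)]) /\ incl B W.
Proof. induction W as [|w W IH].
- exists []. split; [|split].
  + intros c _ k Hk. simpl in Hk. lia.
  + intros w [].
  + intros x [].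
- destruct IH as [B [HI [HS Hincl]]].
  destruct (classic (exists c, Kset d G n (lc (w :: B) c) /\ exists k, (k < length (w :: B))%nat /\ c k <> C0))
    as [[c [Hc [k [Hk Hck]]]]|Nex].
  +
    destruct (classic (c 0%nat = C0)) as [H0|H0].
    * exfalso. assert (HB: Kset d G n (lc B (fun k => c (S k)))).
      { apply (Kev _ _ _ _ _ Hc). intro X. simpl. rewrite H0. ring. }
      destruct k as [|k]; [contradiction|]. apply Hck. apply (HI _ HB). simpl in Hk. lia.
    * exists B. split; [auto|split].
      -- intros v [<-|Hv]; [|auto].
         exists (fun k => Cmul (Copp (Cinv (c 0%nat))) (c (S k))).
         apply (Kev _ _ _ _ (scal_poly (Cinv (c 0%nat)) (lc (w :: B) c))); [apply Kscal; auto|].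
         intro X. rewrite ev_psub, ev_scal, ev_lc_scal. simpl. field. auto.
      -- intros x Hx. right. auto.
  + exists (w :: B). split; [|split].
    * intros c Hc k Hk. apply NNPP. intro Hn. apply Nex. eauto.
    * intros v [<-|Hv].
      -- exists (fun k => match k with 0%nat => C1 | S _ => C0 end).
         apply (Kev _ _ _ _ []); [apply Knil|]. intro X. rewrite ev_psub. simpl.
         rewrite ev_lc_zero. ring.
      -- destruct (HS v Hv) as [c Hc]. exists (fun k => match k with 0%nat => C0 | S k => c k end).
         apply (Kev _ _ _ _ _ Hc). intro X. rewrite !ev_psub. simpl. change (fun k : nat => c k) with c. ring.
    * intros x [<-|Hx]; [left; auto| right; auto].
Qed.

Ltac evsimp := repeat progress (rewrite ?ev_psub, ?ev_app, ?ev_scal, ?ev_lc_add, ?ev_lc_scal, ?ev_lc_zero).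

Definition supp (N : nat) (c : nat -> C) : Prop := forall k, (N <= k)%nat -> c k = C0.
Definition truncv (N : nat) (c : nat -> C) : nat -> C := fun k => if Nat.ltb k N then c k else C0.
Lemma supp_trunc N c : supp N (truncv N c).
Proof. intros k Hk. unfold truncv. destruct (Nat.ltb_spec k N); [lia|reflexivity]. Qed.
Lemma lc_trunc B c : lc B (truncv (length B) c) = lc B c.
Proof. apply lc_ext. intros k Hk. unfold truncv. destruct (Nat.ltb_spec k (length B)); [reflexivity|lia]. Qed.

Definition basis d G n : list word :=
  proj1_sig (constructive_indefinite_description _ (greedy d G n (wordsUp d n))).
Lemma basis_spec d G n : Ind d G n (basis d G n) /\
  (forall w, In w (wordsUp d n) -> inspan d G n (basis d G n) [(w, C1)]) /\ incl (basis d G n) (wordsUp d n).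
Proof. unfold basis. destruct (constructive_indefinite_description _ _). simpl. auto. Qed.

Lemma coord_ex d G n q : exists c, supp (length (basis d G n)) c /\ Kset d G n (psub q (lc (basis d G n) c)).
Proof. destruct (basis_spec d G n) as [HI [HS _]]. set (B := basis d G n) in *.
  induction q as [|[w a] q IH].
  - exists (fun _ => C0). split; [intros k _; reflexivity|].
    apply (Kev _ _ _ _ []); [apply Knil|]. intro X. rewrite ev_psub, ev_lc_zero. simpl. ring.
  - destruct IH as [c1 [Hs1 K1]]. destruct (classic (good d n w)) as [Hg|Hg].
    + apply wordsUp_spec in Hg. destruct (HS w Hg) as [c2 K2].
      exists (truncv (length B) (fun k => Cadd (Cmul a (c2 k)) (c1 k))). split; [apply supp_trunc|].
      rewrite lc_trunc. apply (Kev _ _ _ _ (scal_poly a (psub [(w, C1)] (lc B c2)) ++ psub q (lc B c1))).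
      * apply Kapp; auto. apply Kscal; auto.
      * intro X. rewrite ev_app, ev_scal, !ev_psub, ev_lc_add, ev_lc_scal. simpl. ring.
    + exists c1. split; auto. apply (Kev _ _ _ _ ([(w, a)] ++ psub q (lc B c1))).
      * apply Kapp; auto. apply Kbad; auto.
      * intro X. rewrite ev_app, !ev_psub. simpl. ring.
Qed.

Lemma coord_uniq d G n q c1 c2 : supp (length (basis d G n)) c1 -> supp (length (basis d G n)) c2 ->
  Kset d G n (psub q (lc (basis d G n) c1)) -> Kset d G n (psub q (lc (basis d G n) c2)) -> c1 = c2.
Proof. destruct (basis_spec d G n) as [HI _]. set (B := basis d G n) in *. intros S1 S2 K1 K2.
  assert (HK: Kset d G n (lc B (fun k => Cadd (c1 k) (Cmul (Copp C1) (c2 k))))).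
  { apply (Kev _ _ _ _ _ (Kpsub _ _ _ _ _ K2 K1)). intro X. rewrite ev_lc_add, ev_lc_scal, !ev_psub. ring. }
  apply functional_extensionality. intro k. destruct (Nat.lt_ge_cases k (length B)) as [Hk|Hk].
  - pose proof (HI _ HK k Hk) as E.
    transitivity (Cadd (Cadd (c1 k) (Cmul (Copp C1) (c2 k))) (c2 k)); [ring|]. rewrite E. ring.
  - rewrite S1, S2; auto.
Qed.

Definition coord d G n (q : ncpoly) : nat -> C :=
  proj1_sig (constructive_indefinite_description _ (coord_ex d G n q)).
Lemma coord_spec d G n q : supp (length (basis d G n)) (coord d G n q) /\
   Kset d G n (psub q (lc (basis d G n) (coord d G n q))).
Proof. unfold coord. destruct (constructive_indefinite_description _ _). simpl. auto. Qed.
Lemma coord_eq d G n q c : supp (length (basis d G n)) c ->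
  Kset d G n (psub q (lc (basis d G n) c)) -> coord d G n q = c.
Proof. intros. destruct (coord_spec d G n q). eapply coord_uniq; eauto. Qed.
Lemma coord_K d G n q1 q2 : Kset d G n (psub q1 q2) -> coord d G n q1 = coord d G n q2.
Proof. intro H. destruct (coord_spec d G n q2) as [S2 K2]. apply coord_eq; auto. eapply Ktrans; eauto. Qed.
Lemma coord_app d G n q1 q2 : coord d G n (q1 ++ q2) = fun k => Cadd (coord d G n q1 k) (coord d G n q2 k).
Proof. destruct (coord_spec d G n q1) as [S1 K1]. destruct (coord_spec d G n q2) as [S2 K2].
  apply coord_eq.
  - intros k Hk. rewrite S1, S2 by auto. ring.
  - apply (Kev _ _ _ _ _ (Kapp _ _ _ _ _ K1 K2)). intro X. evsimp. ring.
Qed.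
Lemma coord_scal d G n a q : coord d G n (scal_poly a q) = fun k => Cmul a (coord d G n q k).
Proof. destruct (coord_spec d G n q) as [S1 K1].
  apply coord_eq.
  - intros k Hk. rewrite S1 by auto. ring.
  - apply (Kev _ _ _ _ _ (Kscal _ _ _ a _ K1)). intro X. evsimp. ring.
Qed.
Lemma coord_lc d G n c : supp (length (basis d G n)) c -> coord d G n (lc (basis d G n) c) = c.
Proof. intro S. apply coord_eq; auto. apply (Kev _ _ _ _ _ (Knil d G n)). intro X. rewrite ev_psub. simpl. ring. Qed.
Lemma coord_inK d G n q : Kset d G n q -> coord d G n q = fun _ => C0.
Proof. intro H. apply coord_eq; [intros k _; reflexivity|]. apply (Kev _ _ _ _ _ H). intro X.
  rewrite ev_psub, ev_lc_zero. ring. Qed.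
Lemma coord_zero_K d G n q : coord d G n q = (fun _ => C0) -> Kset d G n q.
Proof. intro E. destruct (coord_spec d G n q) as [_ K1]. rewrite E in K1. apply (Kev _ _ _ _ _ K1).
  intro X. rewrite ev_psub, ev_lc_zero. ring. Qed.
Lemma coord_resp d G n q1 q2 : (forall X, ev X q1 = ev X q2) -> coord d G n q1 = coord d G n q2.
Proof. intro H. apply coord_K. apply (Kev _ _ _ _ _ (Knil d G n)). intro X. rewrite ev_psub, H. simpl. ring. Qed.

Definition Tn d G n (i : nat) : op := fun f => coord d G n (mono_mul [i] (lc (basis d G n) f) []).

Lemma wa d G n w f : w <> [] -> Forall (fun i => (i < d)%nat) w ->
  word_act (Tn d G n) w f = coord d G n (mono_mul w (lc (basis d G n) f) []).
Proof. induction w as [|i w IH]; intros Hn Hf; [congruence|]. inversion Hf; subst. simpl.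
  destruct w as [|j w']; [reflexivity|]. rewrite IH by (congruence || auto).
  set (Q := mono_mul (j :: w') (lc (basis d G n) f) []). unfold Tn. apply coord_K.
  destruct (coord_spec d G n Q) as [_ KQ]. apply Ksym in KQ. apply (Kleft _ _ _ i) in KQ; auto.
  apply (Kev _ _ _ _ _ KQ). intro X. unfold Q. rewrite ev_psub, !ev_mono, ev_psub, !ev_mono.
  f_equal. apply ev_ext. intro u. simpl. rewrite !app_nil_r. reflexivity.
Qed.

Definition mul (g h : ncpoly) : ncpoly := flat_map (fun t => scal_poly (snd t) (mono_mul (fst t) h [])) g.
Definition mul' (g h : ncpoly) : ncpoly := flat_map (fun s => scal_poly (snd s) (mono_mul [] g (fst s))) h.

Lemma ev_mul X g h : ev X (mul g h) = ev (fun w => ev (fun v => X (w ++ v ++ [])) h) g.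
Proof. unfold mul. induction g as [|[w c] g IH]; simpl; [reflexivity|]. rewrite ev_app, IH, ev_scal, ev_mono. reflexivity. Qed.
Lemma ev_mul' X g h : ev X (mul' g h) = ev (fun v => ev (fun w => X ([] ++ w ++ v)) g) h.
Proof. unfold mul'. induction h as [|[w c] h IH]; simpl; [reflexivity|]. rewrite ev_app, IH, ev_scal, ev_mono. reflexivity. Qed.
Lemma ev_mul_eq X g h : ev X (mul g h) = ev X (mul' g h).
Proof. rewrite ev_mul, ev_mul', ev_swap. apply ev_ext. intro v. apply ev_ext. intro w.
  simpl. rewrite app_nil_r. reflexivity. Qed.
Lemma mul'_J d G g h : in_ideal d G g -> Forall (fun s => Forall (fun i => (i < d)%nat) (fst s)) h -> in_ideal d G (mul' g h).
Proof. intros Hg Hh. unfold mul'. apply J_flat. eapply Forall_impl; [|exact Hh]. intros s Hs.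
  apply J_scal. apply J_mono; auto. Qed.
Lemma mul_K d G n g h : Forall (fun t => Forall (fun i => (i < d)%nat) (fst t)) g -> Kset d G n h -> Kset d G n (mul g h).
Proof. intros Hg Hh. unfold mul. apply Kflat. eapply Forall_impl; [|exact Hg]. intros s Hs.
  apply Kscal. apply Kwords; auto. Qed.
Lemma ev_mul_psub X g h1 h2 : ev X (mul g (psub h1 h2)) = Csub (ev X (mul g h1)) (ev X (mul g h2)).
Proof. rewrite !ev_mul.
  rewrite (ev_ext _ (fun w => Cadd (ev (fun v => X (w ++ v ++ [])) h1) (Cmul (Copp C1) (ev (fun v => X (w ++ v ++ [])) h2)))).
  - rewrite ev_Xadd, ev_Xscal. unfold Csub. ring.
  - intro w. rewrite ev_psub. unfold Csub. ring.
Qed.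

Lemma coord_mul d G n g h m : ev (fun w => coord d G n (mono_mul w h []) m) g = coord d G n (mul g h) m.
Proof. unfold mul. induction g as [|[w c] g IH]; simpl.
  - rewrite coord_inK by apply Knil. reflexivity.
  - rewrite coord_app, coord_scal. rewrite <- IH. reflexivity. Qed.

Lemma lc_basis_letters d G n f : Forall (fun s => Forall (fun i => (i < d)%nat) (fst s)) (lc (basis d G n) f).
Proof. eapply Forall_impl; [|apply lc_words]. intros s Hs. simpl in Hs.
  destruct (basis_spec d G n) as [_ [_ Hinc]]. apply Hinc, wordsUp_spec in Hs. apply Hs. Qed.

Lemma T_vanish d G n g f m : in_ideal d G g -> coef g [] = C0 -> peval (Tn d G n) g f m = C0.
Proof. intros Hg H0. rewrite peval_ev.
  rewrite (ev_point _ (fun w => coord d G n (mono_mul w (lc (basis d G n) f) []) m) g []).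
  - rewrite H0. rewrite coord_mul. rewrite (coord_resp _ _ _ _ (mul' g (lc (basis d G n) f))) by (intro; apply ev_mul_eq).
    rewrite coord_inK. + ring. + apply KJ. apply mul'_J; auto. apply lc_basis_letters.
  - destruct Hg as [Hp _]. eapply Forall_impl; [|exact Hp]. intros t Ht Hne. rewrite wa; auto.
Qed.

Lemma T_nonvanish d G n p m : is_poly d p ->
  peval (Tn d G n) p (coord d G n [([], C1)]) m = coord d G n p m.
Proof. intro Hp. set (B := basis d G n). set (f0 := coord d G n [([], C1)]). rewrite peval_ev.
  destruct (coord_spec d G n [([], C1)]) as [S0 K0]. fold B f0 in S0, K0.
  rewrite (ev_ext_Forall _ (fun w => coord d G n (mono_mul w (lc B f0) []) m)).
  - rewrite coord_mul.
    rewrite (coord_K _ _ _ (mul p (lc B f0)) (mul p [([], C1)])).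
    + rewrite (coord_resp d G n (mul p [([], C1)]) p); [reflexivity|]. intro X. rewrite ev_mul. apply ev_ext. intro w. simpl.
      rewrite app_nil_r. ring.
    + apply Ksym in K0. apply (mul_K _ _ _ p) in K0; [|exact Hp].
      apply (Kev _ _ _ _ _ K0). intro X. rewrite ev_mul_psub, ev_psub. reflexivity.
  - eapply Forall_impl; [|exact Hp]. intros [w c] Hw. simpl in *. destruct w as [|i w].
    + simpl. rewrite (coord_resp _ _ _ _ (lc B f0)); [rewrite coord_lc; auto|].
      intro X. rewrite ev_mono. apply ev_ext. intro u. simpl. rewrite app_nil_r. reflexivity.
    + rewrite wa; auto. congruence.
Qed.

Fixpoint Rsum (N : nat) (h : nat -> R) : R := match N with 0%nat => 0%R | S N => (Rsum N h + h N)%R end.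
Fixpoint Csum (N : nat) (h : nat -> C) : C := match N with 0%nat => C0 | S N => Cadd (Csum N h) (h N) end.

Lemma Csum_shift N h : Csum (S N) h = Cadd (h 0%nat) (Csum N (fun k => h (S k))).
Proof. induction N; simpl in *; [ring|]. rewrite IHN. ring. Qed.
Lemma Rsum_nonneg N h : (forall k, 0 <= h k)%R -> (0 <= Rsum N h)%R.
Proof. intro H. induction N; simpl; [lra|]. specialize (H N). lra. Qed.
Lemma Rsum_shift N h : Rsum (S N) h = (h 0%nat + Rsum N (fun k => h (S k)))%R.
Proof. induction N; simpl in *; [lra|]. rewrite IHN. lra. Qed.
Lemma Rsum_le N g h : (forall k, (k < N)%nat -> g k <= h k)%R -> (Rsum N g <= Rsum N h)%R.
Proof. induction N; intro H; simpl; [lra|]. assert (H1 := H N). assert (Rsum N g <= Rsum N h)%R by (apply IHN; intros; apply H; lia).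
  specialize (H1 ltac:(lia)). lra. Qed.
Lemma Rsum_scal N c h : Rsum N (fun k => c * h k)%R = (c * Rsum N h)%R.
Proof. induction N; simpl; [ring|]. rewrite IHN. ring. Qed.
Lemma Rsum_mono N k h : (forall j, 0 <= h j)%R -> (Rsum N h <= Rsum (N + k) h)%R.
Proof. intro H. induction k; [rewrite Nat.add_0_r; lra|]. rewrite Nat.add_succ_r. simpl. specialize (H (N+k)%nat). lra. Qed.
Lemma sum_f_R0_Rsum s n : sum_f_R0 s n = Rsum (S n) s.
Proof. induction n; simpl; [lra|]. rewrite IHn. reflexivity. Qed.

Lemma Cnorm2_nonneg z : (0 <= Cnorm2 z)%R.
Proof. unfold Cnorm2. nra. Qed.
Lemma Cnorm2_mul a b : Cnorm2 (Cmul a b) = (Cnorm2 a * Cnorm2 b)%R.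
Proof. destruct a, b; unfold Cnorm2, Cmul; simpl; ring. Qed.
Lemma Cnorm2_add a b : (Cnorm2 (Cadd a b) <= 2 * Cnorm2 a + 2 * Cnorm2 b)%R.
Proof. destruct a as [x y], b as [u v]; unfold Cnorm2, Cadd; simpl.
 pose proof (Rle_0_sqr (x-u)). pose proof (Rle_0_sqr (y-v)). unfold Rsqr in *. lra. Qed.
Lemma Cnorm2_C0 : Cnorm2 C0 = 0%R.
Proof. unfold Cnorm2, C0; simpl; ring. Qed.

Lemma Csum_norm N h : (Cnorm2 (Csum N h) <= 2 ^ N * Rsum N (fun k => Cnorm2 (h k)))%R.
Proof. induction N; simpl.
- rewrite Cnorm2_C0. lra.
- pose proof (Cnorm2_add (Csum N h) (h N)). pose proof (Cnorm2_nonneg (h N)).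
  pose proof (Rsum_nonneg N (fun k => Cnorm2 (h k)) (fun k => Cnorm2_nonneg _)).
  assert (1 <= 2 ^ N)%R by (apply pow_R1_Rle; lra). nra.
Qed.

Lemma Rsum_prod N x y : (forall k, 0 <= x k)%R -> (forall k, 0 <= y k)%R ->
  (Rsum N (fun k => x k * y k) <= Rsum N x * Rsum N y)%R.
Proof. intros Hx Hy. induction N; simpl; [lra|].
  pose proof (Rsum_nonneg N x Hx). pose proof (Rsum_nonneg N y Hy). specialize (Hx N). specialize (Hy N). nra. Qed.

Lemma partial_le f l N : sqsum f l -> (Rsum N (fun k => Cnorm2 (f k)) <= l)%R.
Proof. intro H. destruct (Rle_or_lt (Rsum N (fun k => Cnorm2 (f k))) l) as [|Hlt]; [auto|exfalso].
  destruct (H (Rsum N (fun k => Cnorm2 (f k)) - l)%R ltac:(lra)) as [N0 HN0].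
  specialize (HN0 (N0 + N)%nat ltac:(lia)). rewrite sum_f_R0_Rsum in HN0. unfold Rdist in HN0.
  pose proof (Rsum_mono N (S (N0 + N) - N) (fun k => Cnorm2 (f k)) (fun j => Cnorm2_nonneg _)).
  replace (N + (S (N0 + N) - N))%nat with (S (N0 + N)) in H0 by lia.
  pose proof (Rle_abs (Rsum (S (N0 + N)) (fun k => Cnorm2 (f k)) - l)). lra.
Qed.

Lemma sqsum_fin g N : supp N g -> sqsum g (Rsum N (fun k => Cnorm2 (g k))).
Proof. intro HS. intros eps Heps. exists N. intros m Hm. rewrite sum_f_R0_Rsum.
  replace (Rsum (S m) (fun k => Cnorm2 (g k))) with (Rsum N (fun k => Cnorm2 (g k))).
  - unfold Rdist. rewrite Rminus_diag, Rabs_R0. lra.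
  - replace (S m) with (N + (S m - N))%nat by lia. generalize (S m - N)%nat. intro k. induction k.
    + rewrite Nat.add_0_r. reflexivity.
    + rewrite Nat.add_succ_r. simpl. rewrite <- IHk. rewrite HS by lia. rewrite Cnorm2_C0. ring.
Qed.
Lemma supp_l2 g N : supp N g -> in_l2 g.
Proof. intro HS. eexists. apply sqsum_fin; eauto. Qed.

Lemma T_add d G n i f g : Tn d G n i (vadd f g) = vadd (Tn d G n i f) (Tn d G n i g).
Proof. unfold Tn.
  rewrite (coord_resp _ _ _ _ (mono_mul [i] (lc (basis d G n) f) [] ++ mono_mul [i] (lc (basis d G n) g) [])).
  - rewrite coord_app. reflexivity.
  - intro X. rewrite ev_app, !ev_mono. unfold vadd. rewrite ev_lc_add. reflexivity. Qed.
Lemma T_scal d G n i c f : Tn d G n i (vscal c f) = vscal c (Tn d G n i f).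
Proof. unfold Tn.
  rewrite (coord_resp _ _ _ _ (scal_poly c (mono_mul [i] (lc (basis d G n) f) []))).
  - rewrite coord_scal. reflexivity.
  - intro X. rewrite ev_scal, !ev_mono. unfold vscal. rewrite ev_lc_scal. reflexivity. Qed.

Lemma coord_lc_gen d G n i B' f m : coord d G n (mono_mul [i] (lc B' f) []) m =
  Csum (length B') (fun k => Cmul (f k) (coord d G n (mono_mul [i] [(nth k B' [], C1)] []) m)).
Proof. revert f. induction B' as [|w B' IH]; intro f.
- simpl. rewrite coord_inK by apply Knil. reflexivity.
- simpl length. rewrite Csum_shift.
  rewrite (coord_resp _ _ _ _ (scal_poly (f 0%nat) (mono_mul [i] [(w, C1)] []) ++ mono_mul [i] (lc B' (fun k => f (S k))) [])).
  + rewrite coord_app, coord_scal. rewrite IH. reflexivity.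
  + intro X. rewrite ev_app, ev_scal, !ev_mono. simpl. ring.
Qed.

Lemma T_bounded d G n i : bounded_op (Tn d G n i).
Proof. split; [|split].
- intros f g _ _ m. rewrite T_add. reflexivity.
- intros c f _ m. rewrite T_scal. reflexivity.
- set (B := basis d G n). set (N := length B).
  set (A := fun k m => coord d G n (mono_mul [i] [(nth k B [], C1)] []) m).
  exists (2 ^ N * Rsum N (fun m => Rsum N (fun k => Cnorm2 (A k m))))%R.
  intros f l Hf. exists (Rsum N (fun m => Cnorm2 (Tn d G n i f m))). split.
  + apply sqsum_fin. unfold Tn. apply coord_spec.
  + assert (Hl : (Rsum N (fun k => Cnorm2 (f k)) <= l)%R) by (apply partial_le; auto).
    assert (Hl0 : (0 <= Rsum N (fun k => Cnorm2 (f k)))%R) by (apply Rsum_nonneg; intro; apply Cnorm2_nonneg).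
    assert (HP : (1 <= 2 ^ N)%R) by (apply pow_R1_Rle; lra).
    rewrite Rmult_assoc, (Rmult_comm _ l), <- Rmult_assoc, <- Rsum_scal.
    apply Rsum_le. intros m Hm.
    unfold Tn. rewrite coord_lc_gen. fold B N.
    eapply Rle_trans; [apply (Csum_norm N (fun k => Cmul (f k) (A k m)))|].
    assert (HR : (0 <= Rsum N (fun k => Cnorm2 (A k m)))%R) by (apply Rsum_nonneg; intro; apply Cnorm2_nonneg).
    assert (Hprod : (Rsum N (fun k => Cnorm2 (Cmul (f k) (A k m))) <= Rsum N (fun k => Cnorm2 (f k)) * Rsum N (fun k => Cnorm2 (A k m)))%R).
    { eapply Rle_trans; [|apply Rsum_prod; intro; apply Cnorm2_nonneg].
      apply Rsum_le. intros k _. cbv beta. rewrite Cnorm2_mul. apply Rle_refl. }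
    apply Rle_trans with (2 ^ N * (Rsum N (fun k => Cnorm2 (f k)) * Rsum N (fun k => Cnorm2 (A k m))))%R.
    { apply Rmult_le_compat_l; [lra|exact Hprod]. }
    rewrite Rmult_assoc. apply Rmult_le_compat_l; [lra|]. apply Rmult_le_compat_r; lra.
Qed.

Lemma one_J d G p : in_ideal d G [([], C1)] -> is_poly d p -> in_ideal d G p.
Proof. intros H1 Hp. apply (J_resp _ _ (mul p [([], C1)])); auto.
  - unfold mul. apply J_flat. eapply Forall_impl; [|exact Hp]. intros t Ht. apply J_scal. apply J_mono; auto.
  - intro w. rewrite !coef_ev. rewrite ev_mul. apply ev_ext. intro u. simpl. rewrite app_nil_r. ring.
Qed.

Lemma const_J d G (hG : forall g, G g -> is_poly d g /\ is_homog g) g :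
  in_ideal d G g -> coef g [] <> C0 -> in_ideal d G [([], C1)].
Proof. intros Hg Ha. pose proof (J_trunc d G hG g 0 Hg) as Ht.
  apply (J_resp _ _ (scal_poly (Cinv (coef g [])) (filter (lenb 0) g))).
  - apply J_scal; auto.
  - repeat constructor.
  - intro w. rewrite coef_scal, coef_filter_len. simpl. destruct w as [|i w]; simpl.
    + field. auto.
    + ring.
Qed.

Definition bound (p : ncpoly) : nat := fold_right (fun t acc => Nat.max (length (fst t)) acc) 0%nat p.
Lemma bound_spec p : Forall (fun t => (length (fst t) <= bound p)%nat) p.
Proof. induction p; simpl; constructor; [lia|]. eapply Forall_impl; [|exact IHp]. simpl; intros; lia. Qed.

Lemma notJ_notK d G (hG : forall g, G g -> is_poly d g /\ is_homog g) p :
  is_poly d p -> ~ in_ideal d G p -> ~ Kset d G (bound p) p.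
Proof. intros Hp Hn [j [Hj E]]. apply Hn. set (n := bound p) in *.
  apply (J_resp _ _ (filter (lenb n) j)); [apply J_trunc; auto| auto|].
  intro w. rewrite coef_filter_len. destruct (Nat.leb_spec (length w) n) as [Hl|Hl].
  - destruct (classic (Forall (fun i => (i < d)%nat) w)) as [Hf|Hf].
    + apply E. split; auto.
    + rewrite (coef_Forall_out (fun w => Forall (fun i => (i < d)%nat) w) p w); auto.
      rewrite (coef_Forall_out (fun w => Forall (fun i => (i < d)%nat) w) j w); auto. destruct Hj; auto.
  - apply (coef_Forall_out (fun w => (length w <= n)%nat)); [apply bound_spec|lia].
Qed.

Lemma part1 d G (hG : forall g, G g -> is_poly d g /\ is_homog g) p : is_poly d p ->
  (inI d (inZ d (in_ideal d G)) p <-> in_ideal d G p).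
Proof. intro Hp. split.
- intros [_ HI]. apply NNPP. intro Hn.
  assert (Hone : ~ in_ideal d G [([], C1)]) by (intro H1; apply Hn; apply one_J; auto).
  set (n := bound p). set (T := Tn d G n).
  assert (HZ : inZ d (in_ideal d G) T).
  { split.
    - intros i _. apply T_bounded.
    - intros g Hg f _ m. apply T_vanish; auto. apply NNPP. intro Ha. apply Hone. eapply const_J; eauto. }
  specialize (HI T HZ). destruct (coord_spec d G n [([], C1)]) as [S0 _].
  specialize (HI _ (supp_l2 _ _ S0)).
  apply (notJ_notK d G hG p Hp Hn). apply coord_zero_K. apply functional_extensionality. intro m.
  rewrite <- (T_nonvanish d G (bound p) p m Hp). apply HI.
- intro HJ. split; auto. intros T [_ HT]. apply HT; auto.
Qed.

Definition Zt (d : nat) (T : nat -> op) : Prop :=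
  forall i, (i < d)%nat -> forall f, in_l2 f -> forall n, T i f n = C0.

Lemma vzero_l2 : in_l2 vzero.
Proof. apply (supp_l2 _ 0). intros k _. reflexivity. Qed.

Lemma Zt_word d T f w : Zt d T -> in_l2 f -> Forall (fun i => (i < d)%nat) w -> w <> [] ->
  forall m, word_act T w f m = C0.
Proof. intros HZ Hf Hw. induction Hw as [|i w Hi Hw IH]; intros Hne m; [congruence|]. simpl.
  destruct w as [|j w'].
  - simpl. apply HZ; auto.
  - assert (E : word_act T (j :: w') f = vzero) by (apply functional_extensionality; intro; apply IH; congruence).
    rewrite E. apply HZ; auto. apply vzero_l2.
Qed.

Lemma Zt_eval d T p f m : Zt d T -> is_poly d p -> in_l2 f -> peval T p f m = Cmul (coef p []) (f m).
Proof. intros HZ Hp Hf. rewrite peval_ev.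
  rewrite (ev_ext_Forall _ (fun w => Cmul (f m) (ind [] w))).
  - rewrite ev_Xscal, <- coef_ev. ring.
  - eapply Forall_impl; [|exact Hp]. intros [w c] Hw. simpl in *. unfold ind.
    destruct (list_eq_dec Nat.eq_dec w []) as [->|Hne].
    + simpl. ring.
    + rewrite Zt_word with (d := d); auto. ring.
Qed.

Definition e0 : vec := fun k => match k with 0%nat => C1 | _ => C0 end.
Lemma e0_l2 : in_l2 e0.
Proof. apply (supp_l2 _ 1). intros k Hk. destruct k; [lia|reflexivity]. Qed.

Lemma vars_iff d p : in_ideal d (variables d) p <-> is_poly d p /\ coef p [] = C0.
Proof. split.
- intros [Hp [L [HL E]]]. split; auto. rewrite E. clear E. induction HL as [|[[[a c] g] b] L Hx HL IH]; simpl; [reflexivity|].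
  rewrite coef_app, IH. destruct Hx as [[i [_ ->]] _]. simpl.
  destruct (list_eq_dec Nat.eq_dec (a ++ i :: b) []) as [E|E]; [destruct a; discriminate|]. ring.
- intros [Hp H0]. split; auto.
  exists (flat_map (fun t => match fst t with [] => [] | i :: w => [([], snd t, [([i], C1)], w)] end) p).
  split.
  + apply Forall_forall. intros x Hx. apply in_flat_map in Hx. destruct Hx as [[w c] [Ht Hx]].
    eapply Forall_forall in Hp; [|exact Ht]. simpl in *. destruct w as [|i w]; [destruct Hx|].
    destruct Hx as [<-|[]]. inversion Hp; subst. repeat split; auto. exists i. split; auto.
  + intro w. rewrite !coef_ev. rewrite (ev_point (ind w) (fun u => if list_eq_dec Nat.eq_dec u [] then C0 else ind w u) p []).
    * rewrite H0. clear Hp H0.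
      transitivity (ev (fun u => if list_eq_dec Nat.eq_dec u [] then C0 else ind w u) p); [ring|].
      induction p as [|[u c] p IH]; simpl; [reflexivity|].
      rewrite flat_map_app, ev_app, IH. destruct u as [|i u]; simpl.
      -- destruct (list_eq_dec Nat.eq_dec [] []); [|congruence]. apply f_equal2; [ring|reflexivity].
      -- destruct (list_eq_dec Nat.eq_dec (i :: u) []); [discriminate|]. apply f_equal2; [|reflexivity]. ring.
    * apply Forall_forall. intros t _ Hne. destruct (list_eq_dec Nat.eq_dec (fst t) []); congruence.
Qed.

Lemma l2_add f g : in_l2 f -> in_l2 g -> in_l2 (vadd f g).
Proof. intros [lf Hf] [lg Hg].
  assert (Hc : Un_cv (fun N => sum_f_R0 (fun k => 2 * Cnorm2 (f k) + 2 * Cnorm2 (g k)) N)%R (2 * lf + 2 * lg)%R).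
  { replace (fun N => sum_f_R0 (fun k => 2 * Cnorm2 (f k) + 2 * Cnorm2 (g k)) N)%R
      with (fun N => 2 * sum_f_R0 (fun k => Cnorm2 (f k)) N + 2 * sum_f_R0 (fun k => Cnorm2 (g k)) N)%R.
    - apply CV_plus; (apply CV_mult; [intros eps He; exists 0%nat; intros; unfold Rdist; rewrite Rminus_diag, Rabs_R0; lra|]); assumption.
    - apply functional_extensionality. intro N. rewrite sum_plus, !scal_sum.
      f_equal; apply sum_eq; intros; ring. }
  destruct (Rseries_CV_comp (fun k => Cnorm2 (vadd f g k)) (fun k => 2 * Cnorm2 (f k) + 2 * Cnorm2 (g k))%R) as [l Hl].
  - intro k. split; [apply Cnorm2_nonneg|apply Cnorm2_add].
  - exists (2 * lf + 2 * lg)%R. exact Hc.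
  - exists l. exact Hl.
Qed.

Lemma l2_scal c f : in_l2 f -> in_l2 (vscal c f).
Proof. intros [lf Hf]. exists (Cnorm2 c * lf)%R.
  assert (E : (fun N => sum_f_R0 (fun k => Cnorm2 (vscal c f k)) N) = (fun N => Cnorm2 c * sum_f_R0 (fun k => Cnorm2 (f k)) N)%R).
  { apply functional_extensionality. intro N. rewrite scal_sum. apply sum_eq. intros. unfold vscal. rewrite Cnorm2_mul. ring. }
  unfold sqsum. change (Un_cv (fun N => sum_f_R0 (fun k => Cnorm2 (vscal c f k)) N) (Cnorm2 c * lf)%R).
  rewrite E. apply CV_mult; [intros eps He; exists 0%nat; intros; unfold Rdist; rewrite Rminus_diag, Rabs_R0; lra|]. exact Hf.
Qed.

Lemma Zt_bounded d T i : Zt d T -> (i < d)%nat -> bounded_op (T i).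
Proof. intros HZ Hi. split; [|split].
- intros f g Hf Hg m. unfold vadd. rewrite !HZ; auto. + apply C_ext; simpl; ring. + apply l2_add; auto.
- intros c f Hf m. unfold vscal. rewrite !HZ; auto. + ring. + apply l2_scal; auto.
- exists 0%R. intros f l Hf. exists 0%R. split; [|lra].
  assert (E : T i f = vzero) by (apply functional_extensionality; intro; apply HZ; auto; exists l; auto).
  rewrite E. replace 0%R with (Rsum 0 (fun k => Cnorm2 (vzero k))) by reflexivity. apply sqsum_fin.
  intros k _. reflexivity.
Qed.

Theorem mainTheorem14 (d : nat) (G : ncpoly -> Prop)
  (hG : forall g, G g -> is_poly d g /\ is_homog g) :
  (forall p, is_poly d p ->
     (inI d (inZ d (in_ideal d G)) p <-> in_ideal d G p)) /\
  ((forall T, inZ d (in_ideal d G) T <->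
       (forall i, (i < d)%nat -> forall f, in_l2 f -> forall n, T i f n = C0)) <->
   (forall p, in_ideal d G p <-> in_ideal d (variables d) p)).
Proof. split; [apply part1; auto|]. split.
- intros HZ p. rewrite vars_iff. split.
  + intro Hp. assert (Hpp : is_poly d p) by apply Hp. split; auto.
    apply part1 in Hp; auto. destruct Hp as [_ HI].
    assert (HT : inZ d (in_ideal d G) (fun _ _ _ => C0)) by (apply HZ; intros; reflexivity).
    specialize (HI _ HT e0 e0_l2 0%nat).
    rewrite (Zt_eval d) in HI; [| intros ? ? ? ? ?; reflexivity | auto | apply e0_l2]. rewrite <- HI. unfold e0. ring.
  + intros [Hp H0]. apply part1; auto. split; auto. intros T HT f Hf m. pose proof (proj1 (HZ T) HT) as HT2. change (Zt d T) in HT2.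
    rewrite (Zt_eval d); [|exact HT2|auto|auto]. rewrite H0. ring.
- intros HJ T. split.
  + intros [_ HT] i Hi f Hf m.
    assert (Hx : in_ideal d G [([i], C1)]).
    { apply HJ. apply vars_iff. split; [unfold is_poly; apply Forall_cons; [apply Forall_cons; [exact Hi|apply Forall_nil]|apply Forall_nil]|simpl; destruct (list_eq_dec Nat.eq_dec [i] []); [discriminate|ring]]. }
    specialize (HT _ Hx f Hf m). simpl in HT. unfold vadd, vscal in HT. rewrite <- HT. unfold vzero. ring.
  + intro HZ. split.
    * intros i Hi. apply (Zt_bounded d); auto.
    * intros g Hg f Hf m. apply HJ in Hg. apply vars_iff in Hg. destruct Hg as [Hp H0].
      rewrite (Zt_eval d); auto. rewrite H0. ring.
Qed.
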